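(* Let $M$ be a matroid on a finite ground set $E$ with rank function $r$, and $k>0$ an integer. Then $\vec S_k$ is $\mathcal F_k$-separable: for all $\vec r,\vec r\,'\in\vec S_k$ with $\vec r\le\vec r\,'$ such that $\mathcal F_k$ forces neither $\vec r$ nor $\overleftarrow{r'}$, there is $(X,Y)\in\vec S_k$ that is $\mathcal F_k$-linked to $\vec r$ and such that $(Y,X)$ is $\mathcal F_k$-linked to $\overleftarrow{r'}$.
   Context: $\vec U$ is the set of all ordered bipartitions $(X,Y)$ of $E$ ($X\cup Y=E$, $X\cap Y=\emptyset$, parts possibly empty), a universe of separations with $(X,Y)\le(X',Y')$ iff $X\subseteq X'$, involution $(X,Y)^*=(Y,X)$, $(X,Y)\vee(X',Y')=(X\cup X',Y\cap Y')$, $(X,Y)\wedge(X',Y')=(X\cap X',Y\cup Y')$. Write $\overleftarrow s=\vec s^{\,*}$. Let $\lambda(X)=r(X)+r(E\setminus X)-r(M)$ and $\vec S_k=\{(X,Y)\in\vec U:\lambda(X)<k\}$, with separations $s=\{\vec s,\overleftarrow s\}$. A star is a nonempty $\sigma\subseteq\vec U$ with $\vec r\le\overleftarrow s$ for all distinct $\vec r,\vec s\in\sigma$. For a star $\sigma=\{(A_i,B_i):i=0,\dots,n\}$ (distinct elements) let $\langle\sigma\rangle=\sum_{i=0}^n r(B_i)-n\,r(M)$; $\mathcal F_k$ is the set of stars $\sigma\subseteq\vec U$ with $\langle\sigma\rangle<k$ (these are subsets of $\vec S_k$). $s$ is degenerate if $\vec s=\overleftarrow s$; $\vec r\in\vec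 S_k$ is trivial if some separation $s$ of $\vec S_k$ has $\vec r<\vec s$, $\vec r<\overleftarrow s$; $\mathcal F_k$ forces $\vec r$ if $\{\overleftarrow r\}\in\mathcal F_k$ or $r$ is degenerate (unforced elements are nontrivial and nondegenerate). For nontrivial nondegenerate $\vec r$, $\vec S_{\ge\vec r}$ is the set of all orientations of separations of $\vec S_k$ having an orientation $\ge\vec r$; for $\vec s_0\ge\vec r$ the shifting map $f:\vec S_{\ge\vec r}\to\vec U$ is $f(\vec s)=\vec s\vee\vec s_0$, $f(\overleftarrow s)=(\vec s\vee\vec s_0)^*$ for all $\vec s\in\vec S_{\ge\vec r}\setminus\{\overleftarrow r\}$ with $\vec s\ge\vec r$. $\vec s_0$ is linked to $\vec r$ if $\vec s_0\ge\vec r$ and $\vec s\vee\vec s_0\in\vec S_k$ for all $\vec s\in\vec S_k$ with $\vec s\ge\vec r$, $\vec s\ne\overleftarrow r$; it is $\mathcal F_k$-linked to $\vec r$ if moreover $f(\sigma)\in\mathcal F_k$ for every star $\sigma\in\mathcal F_k$ with $\sigma\subseteq\vec S_{\ge\vec r}\setminus\{\overleftarrow r\}$ having an element $\ge\vec r$. *)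

(* Defs.v *)
From HB Require Import structures.
From mathcomp Require Import all_boot all_order all_algebra.
Set Implicit Arguments. Unset Strict Implicit. Unset Printing Implicit Defensive.
Import GRing.Theory Num.Theory.

Record matroid (E : finType) := Matroid {
  rank : {set E} -> nat;
  rank_card : forall X, rank X <= #|X|;
  rank_mono : forall X Y : {set E}, X \subset Y -> rank X <= rank Y;
  rank_submod : forall X Y : {set E}, rank (X :|: Y) + rank (X :&: Y) <= rank X + rank Y
}.

Section Seps.
Variables (E : finType) (M : matroid E).
Local Notation r := (rank M).

(* An oriented separation (X,Y) in U is encoded by X : {set E}; its second
   part is Y = ~: X.
   Join: (X,Y) v (X',Y') = (X :|: X', Y :&: Y'), i.e. X :|: X'. *)
Definition sinv (s : {set E}) : {set E} := ~: s.
Definition sle (s t : {set E}) : bool := s \subset t.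
Definition slt (s t : {set E}) : bool := (s \subset t) && (s != t).
Definition sjoin (s t : {set E}) : {set E} := s :|: t.

Definition conn (X : {set E}) : nat := r X + r (~: X) - r setT.

Definition inSk (k : nat) (s : {set E}) : bool := conn s < k.

Definition star (sigma : {set {set E}}) : bool :=
  (sigma != set0) &&
  [forall s in sigma, forall t in sigma, (s != t) ==> sle s (sinv t)].

Definition star_order (sigma : {set {set E}}) : int :=
  (\sum_(s in sigma) (r (~: s))%:Z - ((#|sigma| - 1) * r setT)%:Z)%R.

Definition inFk (k : nat) (sigma : {set {set E}}) : bool :=
  star sigma && (star_order sigma < (k%:Z))%R.

Definition degenerate (s : {set E}) : bool := s == sinv s.

Definition trivial_sep (k : nat) (x : {set E}) : bool :=
  inSk k x &&
  [exists s, [&& inSk k s, inSk k (sinv s), slt x s & slt x (sinv s)]].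

Definition forces (k : nat) (x : {set E}) : Prop :=
  inFk k [set sinv x] \/ degenerate x.

Definition inSge (k : nat) (x s : {set E}) : bool :=
  [&& inSk k s, inSk k (sinv s) & (sle x s || sle x (sinv s))].

(* shifting map f onto s0 : f(s) = s v s0, f(s^* ) = (s v s0)^* for s >= r,
   s <> r^*. *)
Definition shift (x s0 s : {set E}) : {set E} :=
  if sle x s && (s != sinv x) then sjoin s s0
  else sinv (sjoin (sinv s) s0).

Definition linked (k : nat) (s0 x : {set E}) : Prop :=
  sle x s0 /\
  forall s, inSk k s -> sle x s -> s != sinv x -> inSk k (sjoin s s0).

Definition Fk_linked (k : nat) (s0 x : {set E}) : Prop :=
  linked k s0 x /\
  forall sigma : {set {set E}},
    inFk k sigma ->
    (forall s, s \in sigma -> inSge k x s && (s != sinv x)) ->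
    (exists2 s, s \in sigma & sle x s) ->
    inFk k (shift x s0 @: sigma).

End Seps.

(* Main.v *)
Require Import Defs.
From HB Require Import structures.
From mathcomp Require Import all_boot all_order all_algebra.
From mathcomp Require Import zify.
Import GRing.Theory Num.Theory.
Set Implicit Arguments. Unset Strict Implicit. Unset Printing Implicit Defensive.

Section Aux.
Variables (E : finType) (M : matroid E).
Local Notation r := (rank M).

Lemma conn_add X : conn M X + r setT = r X + r (~: X).
Proof.
have := rank_submod M X (~: X). rewrite setUCr setICr.
have := rank_card M set0. rewrite cards0 /conn. lia.
Qed.

Lemma conn_compl X : conn M (~: X) = conn M X.
Proof. by rewrite /conn setCK addnC. Qed.

Lemma sum_collide (T U : finType) (A : {set T}) (h : T -> U) (G : U -> nat) c :
  (forall a b, a \in A -> b \in A -> a != b -> h a = h b -> G (h a) = c) ->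
  \sum_(a in A) G (h a) + #|h @: A| * c = \sum_(u in h @: A) G u + #|A| * c.
Proof.
move=> Hc.
rewrite -(sum_nat_const (mem (h @: A))) -(sum_nat_const (mem A)).
rewrite (@partition_big_imset _ _ _ _ _ h A (fun a => G (h a))) (@partition_big_imset _ _ _ _ _ h A (fun _ => c)).
rewrite -!big_split /=.
apply: eq_bigr => u /imsetP [a aA ->].
have [Ge|Gne] := eqVneq (G (h a)) c.
  rewrite (eq_bigr (fun _ => c)); last by move=> i /andP[_ /eqP ->].
  by rewrite Ge addnC.
rewrite (big_pred1 a) ?(big_pred1 a) //.
  move=> i /=; apply/andP/eqP => [[iA /eqP hia]|->]; last by rewrite aA eqxx.
  apply/eqP; apply/negPn/negP => nia.
  by move: Gne; rewrite -hia (Hc i a) // eqxx.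
move=> i /=; apply/andP/eqP => [[iA /eqP hia]|->]; last by rewrite aA eqxx.
apply/eqP; apply/negPn/negP => nia.
by move: Gne; rewrite -hia (Hc i a) // eqxx.
Qed.

Lemma chain_sum X (T : {set {set E}}) (P Q : {set E}) :
  (forall t, t \in T -> P \subset ~: t) ->
  (forall t t', t \in T -> t' \in T -> t != t' -> t \subset ~: t') ->
  P \subset Q -> (forall t, t \in T -> t :&: X \subset Q) ->
  \sum_(t in T) r (~: t :|: X) + r P <= \sum_(t in T) r (~: t) + r Q.
Proof.
move: {2}#|T| (leqnn #|T|) => n; elim: n T P => [|n IH] T P.
  rewrite leqn0 cards_eq0 => /eqP -> _ _ PQ _; rewrite !big_set0 /=.
  by rewrite !add0n; apply: rank_mono.
move=> HT HP Hdis PQ HQ.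
have [->|[t tT]] := set_0Vmem T.
  rewrite !big_set0 /=. by rewrite !add0n; apply: rank_mono.
rewrite !(big_setD1 t tT) /=.
have Ht : P \subset ~: t := HP t tT.
have IH' := IH (T :\ t) (P :|: (t :&: X)).
have le1 : #|T :\ t| <= n.
  by move: HT; rewrite (cardsD1 t T) tT.
have := IH' le1.
have sub := rank_submod M (~: t) (P :|: (t :&: X)).
have e1 : ~: t :|: (P :|: t :&: X) = ~: t :|: X.
  apply/setP=> e; rewrite !inE; have := subsetP Ht e; rewrite !inE.
  by case: (e \in P) (e \in t) (e \in X) => [] [] [] //= /(_ isT).
have e2 : ~: t :&: (P :|: t :&: X) = P.
  apply/setP=> e; rewrite !inE; have := subsetP Ht e; rewrite !inE.
  by case: (e \in P) (e \in t) (e \in X) => [] [] [] //= /(_ isT).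
rewrite e1 e2 in sub.
move=> H.
have H2 : \sum_(i in T :\ t) r (~: i :|: X) + r (P :|: t :&: X) <=
        \sum_(i in T :\ t) r (~: i) + r Q.
  apply: H.
  - move=> t' /setD1P [t't t'T]; rewrite subUset HP //=.
    apply: subset_trans (subsetIl _ _) _; apply: Hdis => //; by rewrite eq_sym.
  - move=> a b /setD1P[_ aT] /setD1P[_ bT]; exact: Hdis.
  - by rewrite subUset PQ HQ.
  - move=> t' /setD1P[_ t'T]; exact: HQ.
set S1 := \sum_(i in T :\ t) r (~: i :|: X) in H2 *. set S2 := \sum_(i in T :\ t) r (~: i) in H2 *. clear IH IH' H HP Hdis HQ HT. lia.
Qed.


Lemma order_nat (tau : {set {set E}}) :
  star_order M tau = (Posz (\sum_(u in tau) r (~: u)) - Posz ((#|tau| - 1) * r setT))%R.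
Proof.
rewrite /star_order; congr (_ - _)%R.
by rewrite (big_morph Posz PoszD (erefl (Posz 0))).
Qed.

Lemma self_compl (A : {set E}) : A \subset ~: A -> A = set0.
Proof.
move=> H; apply/setP => e; rewrite inE; apply/negP => eA.
by move/subsetP: H => /(_ e eA); rewrite inE eA.
Qed.

Lemma key k (x X : {set E}) : x != set0 -> x \subset X ->
  (forall W : {set E}, x \subset W -> W \subset X -> conn M X <= conn M W) ->
  Fk_linked M k X x.
Proof.
move=> hx0 xX hmin; split.
  split; first exact: xX.
  move=> s sk xs _; rewrite /inSk /sjoin.
  have h1 := hmin (s :&: X) (ltac:(by rewrite subsetI; apply/andP)) (subsetIr _ _).
  have c1 := conn_add (s :|: X); have c2 := conn_add (s :&: X).
  have c3 := conn_add s; have c4 := conn_add X.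
  rewrite setCU in c1; rewrite setCI in c2.
  have s1 := rank_submod M s X; have s2 := rank_submod M (~: s) (~: X).
  move: sk; rewrite /inSk => sk. lia.
move=> sigma /andP[/andP[sne /forallP Hst0] ordS] Hsig [a0 a0S xa0].
have Hst : forall s t, s \in sigma -> t \in sigma -> s != t -> s \subset ~: t.
  move=> s t sS tS st.
  by move: (Hst0 s) => /implyP/(_ sS)/forallP/(_ t)/implyP/(_ tS)/implyP/(_ st).
have a0nx : a0 != sinv x by case/andP: (Hsig a0 a0S).
set f := shift x X.
have fa0 : f a0 = a0 :|: X by rewrite /f /shift xa0 a0nx.
have ft : forall t, t \in sigma -> t != a0 -> f t = ~: (~: t :|: X).
  move=> t tS ta.
  have nxt : ~~ (x \subset t).
    apply/negP => xt; move: hx0.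
    have : x \subset t :&: a0 by rewrite subsetI xt; exact: xa0.
    have := Hst t a0 tS a0S ta.
    rewrite -disjoints_subset -setI_eq0 => /eqP ->.
    by rewrite subset0 => ->.
  by rewrite /f /shift /sle (negbTE nxt).
have disj : forall a b, a \in sigma -> b \in sigma -> a != b -> f a \subset ~: f b.
  move=> a b aS bS ab.
  have hab := Hst a b aS bS ab.
  have [ea|na] := eqVneq a a0.
    rewrite ea fa0 ft //; last by rewrite -ea eq_sym.
    rewrite setCK; apply/subsetP => e; rewrite !inE.
    move/subsetP: hab => /(_ e); rewrite ea !inE.
    by case: (e \in a0) (e \in b) (e \in X) => [] [] [] //= /(_ isT).
  have [eb|nb] := eqVneq b a0.
    rewrite eb fa0 ft //; apply/subsetP => e; rewrite !inE.
    move/subsetP: hab => /(_ e); rewrite eb !inE.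
    by case: (e \in a) (e \in a0) (e \in X) => [] [] [] //= /(_ isT).
  rewrite !ft // setCK; apply/subsetP => e; rewrite !inE.
  move/subsetP: hab => /(_ e); rewrite !inE.
  by case: (e \in a) (e \in b) (e \in X) => [] [] [] //= /(_ isT).
apply/andP; split.
  apply/andP; split.
    apply/set0Pn; exists (f a0); exact: imset_f.
  apply/forallP => u; apply/implyP => /imsetP[a aS ->].
  apply/forallP => v; apply/implyP => /imsetP[b bS ->].
  apply/implyP => neq; apply: disj => //.
  by apply: contraNneq neq => ->.
have coll := @sum_collide _ _ sigma f (fun u => r (~: u)) (r setT).
have coll' := coll (fun a b aS bS ab fab =>
   ltac:(have := disj a b aS bS ab; rewrite -fab => /self_compl ->; by rewrite setC0)).
have ineq : \sum_(s in sigma) r (~: f s) <= \sum_(s in sigma) r (~: s).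
  rewrite !(big_setD1 a0 a0S) /= fa0.
  rewrite (eq_bigr (fun s => r (~: s :|: X))); last first.
    by move=> s /setD1P[sa sS]; rewrite ft // setCK.
  have ch := chain_sum (X := X) (T := sigma :\ a0) (P := a0 :&: X) (Q := X).
  have hA : forall t, t \in sigma :\ a0 -> a0 :&: X \subset ~: t.
    move=> t /setD1P[ta tT]; apply: subset_trans (subsetIl _ _) _.
    by apply: Hst => //; rewrite eq_sym.
  have hB : forall t t', t \in sigma :\ a0 -> t' \in sigma :\ a0 -> t != t' -> t \subset ~: t'.
    move=> t t' /setD1P[_ tT] /setD1P[_ t'T]; exact: Hst.
  have ch' := ch hA hB (subsetIr _ _) (fun t _ => subsetIr _ _).
  have h1 := hmin (a0 :&: X) (ltac:(by rewrite subsetI; apply/andP)) (subsetIr _ _).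
  have c2 := conn_add (a0 :&: X); have c4 := conn_add X.
  rewrite setCI in c2.
  have s2 := rank_submod M (~: a0) (~: X).
  rewrite setCU. clear coll coll' Hsig Hst Hst0 ft disj hA hB ch. move: ch'; set S1 := \sum_(_ in _) _; set S2 := \sum_(_ in _) _ ; move=> ch'; lia.
have n1 : 0 < #|sigma| by rewrite card_gt0.
have n2 : 0 < #|f @: sigma| by rewrite card_gt0; apply/set0Pn; exists (f a0); exact: imset_f.
move: ordS; rewrite !order_nat.
move: coll' ineq n1 n2.
set S1 := \sum_(a in sigma) r (~: f a).
set S2 := \sum_(s in sigma) r (~: s).
set S3 := \sum_(u in f @: sigma) r (~: u).
move: #|sigma| #|f @: sigma| (r setT) => n n' e.
clearbody S1 S2 S3. move: S1 S2 S3 => S1 S2 S3. clear -S1 S2 S3 n n' e k. rewrite !ltrBlDr -!PoszD !ltz_nat. case: n => [|n]; case: n' => [|n'] //; rewrite !mulSn !subn1 /=. lia.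
Qed.

Lemma nonempty_of_unforced k x : 0 < k -> ~ forces M k x -> x != set0.
Proof.
move=> hk nf; apply/negP => /eqP x0; apply: nf; left.
rewrite /inFk; apply/andP; split.
  apply/andP; split; first by apply/set0Pn; exists (sinv x); rewrite inE.
  apply/forallP => s; apply/implyP => /set1P ->.
  apply/forallP => t; apply/implyP => /set1P ->; by rewrite eqxx.
rewrite order_nat big_set1 cards1 /sinv setCK x0 subnn mul0n subr0 ltz_nat.
have := rank_card M set0; rewrite cards0; lia.
Qed.

End Aux.

Theorem lemma5p15 (E : finType) (M : matroid E) (k : nat) (hk : 0 < k) :
  forall x x' : {set E},
    inSk M k x -> inSk M k x' -> sle x x' ->
    ~ forces M k x -> ~ forces M k (sinv x') ->
    exists X : {set E},
      [/\ inSk M k X, Fk_linked M k X x & Fk_linked M k (sinv X) (sinv x')].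
Proof.
move=> x x' xk x'k xx' nfx nfx'.
have hx0 := nonempty_of_unforced hk nfx.
have hx'0 := nonempty_of_unforced hk nfx'.
pose P := fun W : {set E} => (x \subset W) && (W \subset x').
have Px : P x by rewrite /P subxx; exact: xx'.
case: (arg_minnP (conn M) Px) => X /andP[xX Xx'] Xmin.
exists X; split.
- by rewrite /inSk; apply: leq_ltn_trans (Xmin x Px) xk.
- apply: key => // W xW WX; apply: Xmin; rewrite /P xW /=.
  exact: subset_trans WX Xx'.
- apply: key => //; first by rewrite /sinv setCS.
  rewrite /sinv => W x'W WX; rewrite conn_compl -(conn_compl M W); apply: Xmin.
  rewrite /P; apply/andP; split.
    apply: subset_trans xX _; by rewrite -setCS setCK.
  by rewrite -setCS setCK.
Qed.
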